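(* Consider a Fisher market with agents $N$, budgets $b_i>0$ for $i\in N$, indivisible items $M$, and monotone preferences $\preceq_i$. For every competitive equilibrium $(\mathcal S,p)$ such that $S_i\ne\emptyset$ for every $i\in N$, there exists a price vector $p'$ such that $(\mathcal S,p')$ is a competitive equilibrium and $p'$ is budget-exhausting, i.e., $p'(S_i)=b_i$ for every $i\in N$.
   Context: A monotone preference $\preceq_i$ is a complete and transitive weak order over all subsets of $M$ such that $S\preceq_i T$ whenever $S\subseteq T$; $S\prec_i T$ means $S\preceq_i T$ and not $T\preceq_i S$. For prices $p$, $p(S)=\sum_{j\in S}p_j$. A bundle $S$ is demanded by agent $i$ if $p(S)\le b_i$ and $p(T)>b_i$ for every $T$ with $S\prec_i T$. A competitive equilibrium is a pair $(\mathcal S,p)$ with $\mathcal S=(S_i)_{i\in N}$ a partition of all of $M$ among the agents such that each $S_i$ is demanded by agent $i$ at prices $p$. *)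

(* Defs.v *)
From mathcomp Require Import all_boot all_order all_algebra.
Set Implicit Arguments. Unset Strict Implicit. Unset Printing Implicit Defensive.
Import Order.TTheory GRing.Theory Num.Theory.
Local Open Scope ring_scope.

Section Market.
Variables (R : realFieldType) (N M : finType).

Definition monotone_pref (pref : rel {set M}) : Prop :=
  (forall S T : {set M}, pref S T || pref T S) /\
  (forall S T U : {set M}, pref S T -> pref T U -> pref S U) /\
  (forall S T : {set M}, S \subset T -> pref S T).

Definition strict_pref (pref : rel {set M}) (S T : {set M}) : bool :=
  pref S T && ~~ pref T S.

Definition price_vector (p : M -> R) : Prop := forall j, 0 <= p j.

Definition price (p : M -> R) (S : {set M}) : R := \sum_(j in S) p j.

Definition demanded (pref : rel {set M}) (bi : R) (p : M -> R) (S : {set M})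
  : Prop :=
  price p S <= bi /\ forall T : {set M}, strict_pref pref S T -> bi < price p T.

Definition is_allocation (S : N -> {set M}) : Prop :=
  (forall i k, i != k -> [disjoint S i & S k]) /\
  (forall j : M, exists i, j \in S i).

Definition competitive_equilibrium (pref : N -> rel {set M}) (b : N -> R)
  (S : N -> {set M}) (p : M -> R) : Prop :=
  is_allocation S /\ price_vector p /\ forall i, demanded (pref i) (b i) p (S i).

End Market.

(* Main.v *)
Require Import Defs.
From mathcomp Require Import all_boot all_order all_algebra.
Import Order.TTheory GRing.Theory Num.Theory.
Local Open Scope ring_scope.

Theorem mainTheorem6 (R : realFieldType) (N M : finType)
  (b : N -> R) (pref : N -> rel {set M})
  (hb : forall i, 0 < b i)
  (hpref : forall i, monotone_pref (pref i))
  (S : N -> {set M}) (p : M -> R)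
  (hCE : competitive_equilibrium pref b S p)
  (hne : forall i, S i != set0) :
  exists p' : M -> R,
    competitive_equilibrium pref b S p' /\ (forall i, price p' (S i) = b i).
Proof.
case: hCE => [[hdis hcov] [hp hdem]].
pose d k := (b k - price p (S k)) / (#|S k|%:R).
have d0 : forall k, 0 <= d k.
  move=> k; rewrite /d divr_ge0 ?ler0n // subr_ge0; by case: (hdem k).
have dj : forall j i, j \in S i -> \sum_(k | j \in S k) d k = d i.
  move=> j i ji; rewrite (big_pred1 i) // => k /=.
  case: (eqVneq k i) => [->|ki]; first by rewrite ji.
  have ik : i != k by rewrite eq_sym.
  by rewrite (disjointFr (hdis _ _ ik) ji); apply/esym/negbTE.
pose p' j := p j + \sum_(k | j \in S k) d k.
have pp : forall j, p j <= p' j.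
  by move=> j; rewrite /p' lerDl sumr_ge0.
have hS : forall i, price p' (S i) = b i.
  move=> i; rewrite /price /p' big_split /=.
  rewrite [X in _ + X](eq_bigr (fun _ => d i)); last by move=> j ji; exact: dj.
  rewrite sumr_const -mulr_natr /d divfK; first by rewrite -/(price p (S i)) addrC subrK.
  by rewrite pnatr_eq0 cards_eq0.
exists p'; split => //; split; first by [].
split; first by move=> j; apply: (le_trans (hp j)).
move=> i; split; first by rewrite hS.
move=> T sT; case: (hdem i) => _ /(_ T sT) lt.
apply: (lt_le_trans lt); rewrite /price; apply: ler_sum => j _; exact: pp.
Qed.
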